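(* Let $\mathbb{K}\in\{\mathbb{R},\mathbb{C}\}$ and let $\mathcal{X}$ be a topological $\mathbb{K}$-vector space whose topological dual $\mathcal{X}^{\ast}$ separates the points of $\mathcal{X}$. Then for every cylinder $\mathcal{V}\in\mathcal{C}$, both $\mathbf{B}_{\mathcal{V}}(\mathcal{X}^{\ast})$ and its complement $\mathbf{F}(\mathcal{X}^{\ast})\setminus\mathbf{B}_{\mathcal{V}}(\mathcal{X}^{\ast})$ are closed (hence both are open and closed) subsets of $\mathbf{F}(\mathcal{X}^{\ast})$ in the weak*-Hausdorff hypertopology.
   Context: Topological vector spaces are Hausdorff. $\mathcal{X}^{\ast}$ carries the weak* topology. $\mathbf{F}(\mathcal{X}^{\ast})$ is the set of nonempty weak*-closed subsets of $\mathcal{X}^{\ast}$. For $A\in\mathcal{X}$ and $F,\tilde F\in\mathbf{F}(\mathcal{X}^{\ast})$, $d_H^{(A)}(F,\tilde F)=\max\{\sup_{\sigma\in F}\inf_{\tilde\sigma\in\tilde F}|(\sigma-\tilde\sigma)(A)|,\ \sup_{\tilde\sigma\in\tilde F}\inf_{\sigma\in F}|(\sigma-\tilde\sigma)(A)|\}\in[0,\infty]$. The weak*-Hausdorff hypertopology on $\mathbf{F}(\mathcal{X}^{\ast})$ is the topology generated by the family of extended pseudometrics $\{d_H^{(A)}\}_{A\in\mathcal{X}}$ (a net $F_j\to F$ iff $d_H^{(A)}(F_j,F)\to0$ for all $A\in\mathcal{X}$). For $A\in\mathcal{X}$ let $\mathcal{V}_A=\{\sigma\in\mathcal{X}^{\ast}:|\sigma(A)|<1\}$;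 $\mathcal{C}=\{\bigcap_{j=1}^n\mathcal{V}_{A_j}: n\in\mathbb{N},\ A_1,\dots,A_n\in\mathcal{X}\}$. For $\mathcal{V}\in\mathcal{C}$, $\mathbf{B}_{\mathcal{V}}(\mathcal{X}^{\ast})=\{B\in\mathbf{F}(\mathcal{X}^{\ast}): B\subseteq\lambda\mathcal{V}\text{ for some }\lambda>0\}$. *)

(* Defs.v *)
From HB Require Import structures.
From mathcomp Require Import all_boot all_order all_algebra.
From mathcomp Require Import all_classical all_reals all_analysis.
From mathcomp Require Import complex.
Set Implicit Arguments. Unset Strict Implicit. Unset Printing Implicit Defensive.
Import Order.TTheory GRing.Theory Num.Theory.
Import numFieldTopology.Exports.
Local Open Scope classical_set_scope.
Local Open Scope ring_scope.

Section WeakStarHausdorff.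
(* R : the reals; K : the scalar field (instantiated below with R and C = R[i]);
   nrm : K -> R is the absolute value / modulus of K. *)
Variables (R : realType) (K : numFieldType) (nrm : K -> R).
Variable X : topologicalLmodType K.

Definition dual : set (X -> K) :=
  [set f | (forall (a : K) (x y : X), f (a *: x + y) = a * f x + f y)
           /\ continuous f].

Definition dual_separates : Prop :=
  forall x y : X, x <> y -> exists f, dual f /\ f x <> f y.

(* weak*-closed subsets of X^star : the complement in X^star is weak*-open, where
   basic weak* neighbourhoods of s are
   { t in X^star | |t(A_i) - s(A_i)| < e, i < n }. *)
Definition weakstar_closed (S : set (X -> K)) : Prop :=
  S `<=` dual /\
  forall s, dual s -> ~ S s ->
    exists (n : nat) (A : 'I_n -> X) (e : R), 0 < e /\
      forall t, dual t -> (forall i, nrm (t (A i) - s (A i)) < e) -> ~ S t.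

Definition Fsets : set (set (X -> K)) :=
  [set F | F !=set0 /\ weakstar_closed F].

Definition dH (A : X) (F G : set (X -> K)) : \bar R :=
  maxe
    (ereal_sup [set ereal_inf [set (nrm (s A - t A))%:E | t in G] | s in F])
    (ereal_sup [set ereal_inf [set (nrm (s A - t A))%:E | s in F] | t in G]).

(* open sets of the weak*-Hausdorff hypertopology on F(X^star) (topology
   generated by the family of extended pseudometrics {d_H^(A)}_A) *)
Definition hyper_open (U : set (set (X -> K))) : Prop :=
  U `<=` Fsets /\
  forall F, U F -> exists (n : nat) (A : 'I_n -> X) (e : R), 0 < e /\
    forall G, Fsets G -> (forall i, (dH (A i) F G < e%:E)%E) -> U G.

Definition hyper_closed (S : set (set (X -> K))) : Prop :=
  S `<=` Fsets /\ hyper_open (Fsets `\` S).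

Definition V_ (A : X) : set (X -> K) := [set s | dual s /\ nrm (s A) < 1].

Definition cylinder (n : nat) (A : 'I_n -> X) : set (X -> K) :=
  dual `&` (fun s => forall i, V_ (A i) s).

Definition scale_set (l : K) (V : set (X -> K)) : set (X -> K) :=
  [set fun x => l * s x | s in V].

Definition Bsets (V : set (X -> K)) : set (set (X -> K)) :=
  [set B | Fsets B /\ exists l : K, 0 < l /\ B `<=` scale_set l V].

End WeakStarHausdorff.

Arguments Fsets {R K} nrm X.

Definition prop3p3_for (R : realType) (K : numFieldType) (nrm : K -> R) : Prop :=
  forall X : topologicalLmodType K,
    hausdorff_space X -> dual_separates X ->
    forall (n : nat) (A : 'I_n -> X),
      hyper_closed nrm (Bsets nrm (cylinder nrm A)) /\
      hyper_closed nrm (Fsets nrm X `\` Bsets nrm (cylinder nrm A)).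

Definition cmod (R : realType) (z : R[i]) : R :=
  Num.sqrt (complex.Re z ^+ 2 + complex.Im z ^+ 2).

(* Main.v *)
Require Import Defs.

From HB Require Import structures.
From mathcomp Require Import all_boot all_order all_algebra.
From mathcomp Require Import all_classical all_reals all_analysis.
From mathcomp Require Import complex.
Set Implicit Arguments. Unset Strict Implicit. Unset Printing Implicit Defensive.
Import Order.TTheory GRing.Theory Num.Theory.
Import numFieldTopology.Exports.
Local Open Scope classical_set_scope.
Local Open Scope ring_scope.

Section Gen.
Variables (R : realType) (K : numFieldType) (nrm : K -> R) (c : R -> K).
Hypotheses (nrm_ge0 : forall z, 0 <= nrm z)
  (nrmD : forall a b, nrm (a + b) <= nrm a + nrm b)
  (nrmN : forall a, nrm (- a) = nrm a)
  (nrmM : forall a b, nrm (a * b) = nrm a * nrm b)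
  (c_pos : forall r, 0 < r -> 0 < c r)
  (nrm_c : forall r, 0 <= r -> nrm (c r) = r).

Lemma dH_lt1 (X : topologicalLmodType K) (a : X) F G :
  (dH nrm a F G < 1%:E)%E ->
  (forall s, F s -> exists2 t, G t & nrm (s a - t a) < 1) /\
  (forall t, G t -> exists2 s, F s & nrm (s a - t a) < 1).
Proof.
rewrite /dH gt_max => /andP[h1 h2]; split.
- move=> s Fs.
  have : (ereal_inf [set (nrm (s a - t a))%:E | t in G] < 1%:E)%E.
    apply: le_lt_trans h1; apply: ereal_sup_ubound; by exists s.
  by case/ereal_inf_lt => _ [t Gt <-]; rewrite lte_fin => ?; exists t.
- move=> t Gt.
  have : (ereal_inf [set (nrm (s a - t a))%:E | s in F] < 1%:E)%E.
    apply: le_lt_trans h2; apply: ereal_sup_ubound; by exists t.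
  by case/ereal_inf_lt => _ [s Fs <-]; rewrite lte_fin => ?; exists s.
Qed.

Lemma dual_scale (X : topologicalLmodType K) (k : K) (s : X -> K) :
  dual s -> dual (fun x => k * s x).
Proof.
move=> [lin cs]; split.
  by move=> a x y; rewrite lin mulrDr mulrCA.
by move=> x; apply: continuousM; [exact: cst_continuous | exact: cs].
Qed.

Lemma B_iff (X : topologicalLmodType K) n (A : 'I_n -> X) F :
  Fsets nrm X F ->
  (Bsets nrm (cylinder nrm A) F <->
   forall i, exists M, forall s, F s -> nrm (s (A i)) <= M).
Proof.
move=> FF; split.
  move=> [_ [l [l0 sub]]] i; exists (nrm l) => s /sub [s' [_ cs'] <-].
  rewrite nrmM -[X in _ <= X]mulr1 ler_wpM2l //.
  by have [_ ] := cs' i; apply: ltW.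
move=> hb; have [M hM] := choice hb.
pose N := \sum_i `|M i| + 1.
have N0 : 0 < N by rewrite /N ltr_pwDr ?ltr01 ?sumr_ge0.
have cN0 : c N != 0 by rewrite gt_eqF ?c_pos.
split => //; exists (c N); split; first exact: c_pos.
move=> s Fs; exists (fun x => (c N)^-1 * s x).
  have ds : dual s by case: FF => _ [+ _]; apply.
  split; first exact: dual_scale.
  move=> i; split; first exact: dual_scale.
  have h : nrm (s (A i)) = N * nrm ((c N)^-1 * s (A i)).
    by rewrite -{1}(nrm_c (ltW N0)) -nrmM mulrA divff // mul1r.
  have : nrm (s (A i)) < N.
    apply: le_lt_trans (hM i s Fs) _.
    apply: le_lt_trans (ler_norm _) _.
    rewrite /N ltr_pwDr ?ltr01 //.
    by rewrite (bigD1 i) //= lerDl sumr_ge0.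
  by rewrite h -[X in _ < X]mulr1 ltr_pM2l.
by apply/funext => x; rewrite mulrA divff // mul1r.
Qed.

Lemma gen : @prop3p3_for R K nrm.
Proof.
move=> X _ _ n A; split.
- split; first by move=> B [].
  split; first by move=> F [].
  move=> F [FF nB]; exists n, A, 1; split; first exact: ltr01.
  move=> G FG Hd; split => // BG; apply: nB; apply/(B_iff _ FF) => i.
  have [M hM] := (proj1 (B_iff _ FG) BG) i.
  exists (1 + M) => s Fs.
  have [t Gt lt] := (dH_lt1 (Hd i)).1 s Fs.
  rewrite -(subrK (t (A i)) (s (A i))).
  apply: le_trans (nrmD _ _) _; apply: lerD; [exact: ltW | exact: hM].
- split; first by move=> F [].
  split; first by move=> F [].
  move=> F [FF nnB].
  have BF : Bsets nrm (cylinder nrm A) F.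
    by have [//|nB] := pselect (Bsets nrm (cylinder nrm A) F); exfalso; apply: nnB.
  exists n, A, 1; split; first exact: ltr01.
  move=> G FG Hd; split => //; case=> _; apply; apply/(B_iff _ FG) => i.
  have [M hM] := (proj1 (B_iff _ FF) BF) i.
  exists (M + 1) => t Gt.
  have [s Fs lt] := (dH_lt1 (Hd i)).2 t Gt.
  have -> : t (A i) = s (A i) + - (s (A i) - t (A i)) by rewrite opprB addrC subrK.
  apply: le_trans (nrmD _ _) _; rewrite nrmN; apply: lerD; [exact: hM | exact: ltW].
Qed.
End Gen.

Lemma cmodE (R : realType) (z : R[i]) : cmod z = ComplexField.Normc.normc z.
Proof. by case: z. Qed.

Theorem proposition3p3 (R : realType) :
  prop3p3_for (K := R^o) (fun x : R^o => `|x| : R) /\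
  prop3p3_for (K := (R[i])^o) (fun z : (R[i])^o => cmod (z : R[i])).
Proof.
split.
- apply: (@gen R R^o (fun x : R^o => `|x| : R) id).
  + by move=> z; rewrite normr_ge0.
  + by move=> a b; apply: ler_normD.
  + by move=> a; rewrite normrN.
  + by move=> a b; rewrite normrM.
  + by [].
  + by move=> r r0; rewrite ger0_norm.
- apply: (@gen R (R[i])^o (fun z : (R[i])^o => cmod (z : R[i])) (fun r => (r%:C)%C)).
  + by move=> z; rewrite cmodE /ComplexField.Normc.normc; case: z => a b; rewrite sqrtr_ge0.
  + by move=> a b; rewrite !cmodE; apply: le_normcD.
  + by move=> a; rewrite !cmodE normcN.
  + by move=> a b; rewrite !cmodE ComplexField.Normc.normcM.
  + move=> r r0. rewrite (ltcE (R:=R)) eqxx /=. exact: r0.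
  + move=> r r0; rewrite /cmod (_ : complex.Re _ = r) // (_ : complex.Im _ = 0) //.
    by rewrite expr0n addr0 sqrtr_sqr ger0_norm.
Qed.
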